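(* Let $G$ be a finite group and $H$ a subgroup such that $\mathcal{O}_G(H)=\{K\mid H\le K\le G\}$ is Boolean of rank $2$, with coatoms $M_1,M_2$. If $H$ is normal in $M_1$ and in $M_2$, then $|M_1:H|\neq|M_2:H|$.
   Context: Boolean of rank $2$ means isomorphic to the lattice of subsets of a $2$-element set; the coatoms are the maximal elements of $\mathcal{O}_G(H)\setminus\{G\}$. *)

(* Defs.v *)
From mathcomp Require Import all_boot all_fingroup.
Set Implicit Arguments. Unset Strict Implicit. Unset Printing Implicit Defensive.
Local Open Scope group_scope.

Definition overgroups (gT : finGroupType) (H G : {group gT}) (K : {group gT}) : bool :=
  (H \subset K) && (K \subset G).

(* O_G(H) is Boolean of rank 2: there is an order isomorphism from the
   lattice of subsets of a 2-element set ('I_2) onto O_G(H). *)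
Definition boolean_rank2 (gT : finGroupType) (H G : {group gT}) : Prop :=
  exists f : {set 'I_2} -> {group gT},
    [/\ forall A, overgroups H G (f A),
        forall K : {group gT}, overgroups H G K -> exists A, f A = K
      & forall A B : {set 'I_2}, (A \subset B) = (f A \subset f B)].

Definition coatom (gT : finGroupType) (H G : {group gT}) (K : {group gT}) : Prop :=
  [/\ overgroups H G K, K != G
    & forall L : {group gT}, overgroups H G L -> L != G -> K \subset L -> L = K].

(* Main.v *)
Require Import Defs.
From mathcomp Require Import all_boot all_fingroup all_solvable.
Set Implicit Arguments. Unset Strict Implicit. Unset Printing Implicit Defensive.
Local Open Scope group_scope.

Lemma notin_subC1 (A : {set 'I_2}) i : (A \subset [set~ i]) = (i \notin A).
Proof. by rewrite subsetC sub1set in_setC. Qed.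

Lemma exists_notin (A : {set 'I_2}) : A != setT -> exists i, i \notin A.
Proof.
move=> hA; have: ~~ (setT \subset A).
  by apply: contra hA => h; rewrite eqEsubset h subsetT.
by case/subsetPn=> i _ hi; exists i.
Qed.

Lemma key (gT : finGroupType) (G H M1 M2 : {group gT}) :
  H \subset G -> boolean_rank2 H G ->
  coatom H G M1 -> coatom H G M2 -> M1 != M2 ->
  forall K : {group gT}, overgroups H G K -> ~~ (K \subset M1) -> ~~ (K \subset M2) -> K = G.
Proof.
move=> sHG [f [fO fS fI]] [oM1 nM1 mM1] [oM2 nM2 mM2] n12 K oK nK1 nK2.
have oG : overgroups H G G by rewrite /overgroups sHG subxx.
have fT : f setT = G.
  case: (fS G oG) => A fA; apply: group_inj; apply/eqP; rewrite eq_sym eqEsubset.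
  have := fO setT; case/andP=> _ ->; rewrite -fA -fI subsetT //.
have ntop : forall A, f A != G -> A != setT.
  by move=> A; apply: contra => /eqP ->; rewrite fT.
have coat : forall (M : {group gT}) , overgroups H G M -> M != G ->
   (forall L : {group gT}, overgroups H G L -> L != G -> M \subset L -> L = M) ->
   exists i, f [set~ i] = M.
  move=> M oM nM mM; case: (fS M oM) => A fA.
  have [i hi] := exists_notin (ntop A ltac:(by rewrite fA)).
  exists i; apply: mM; first exact: fO.
    apply/negP => /eqP h.
    have : setT \subset [set~ i] by rewrite fI h -fT.
    by move/subsetP/(_ i (in_setT i)); rewrite !inE eqxx.
  by rewrite -fA -fI notin_subC1.
have [i fi] := coat M1 oM1 nM1 mM1.
have [j fj] := coat M2 oM2 nM2 mM2.
have nij : i != j by apply: contra n12 => /eqP e; rewrite -fi -fj e.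
case: (fS K oK) => A fA.
apply: group_inj; apply/eqP; apply: contraR nK1 => nKG.
have [k hk] := exists_notin (ntop A ltac:(by rewrite fA)).
have sK : K \subset f [set~ k] by rewrite -fA -fI notin_subC1.
have : (k == i) || (k == j).
  by move: k i j nij {fi fj hk sK}; do 3![case=> [[|[|//]]] ?] => //.
case/orP=> /eqP e; first by rewrite -fi -e.
by move: nK2; rewrite -fj -e sK.
Qed.

Theorem lemma10p1 (gT : finGroupType) (G H M1 M2 : {group gT}) :
  H \subset G ->
  boolean_rank2 H G ->
  coatom H G M1 -> coatom H G M2 -> M1 != M2 ->
  (H <| M1)%g -> (H <| M2)%g ->
  #|M1 : H|%g != #|M2 : H|%g.
Proof.
move=> sHG bH c1 c2 n12 nH1 nH2.
have K := key sHG bH c1 c2 n12.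
case: (c1) => /andP[sHM1 sM1G] nM1G mM1.
case: (c2) => /andP[sHM2 sM2G] nM2G mM2.
have n21 : ~~ (M2 \subset M1).
  apply/negP => h; have := mM2 M1 (introT andP (conj sHM1 sM1G)) nM1G h => e.
  by move: n12; rewrite e eqxx.
have n12' : ~~ (M1 \subset M2).
  apply/negP => h; have := mM1 M2 (introT andP (conj sHM2 sM2G)) nM2G h => e.
  by move: n12; rewrite e eqxx.
have nHG : G \subset 'N(H).
  have e : (M1 <*> M2)%G = G.
    apply: K.
    - by rewrite /overgroups (subset_trans sHM1 (joing_subl _ _)) join_subG sM1G sM2G.
    - by apply: contra n21 => h; exact: subset_trans (joing_subr _ _) h.
    - by apply: contra n12' => h; exact: subset_trans (joing_subl _ _) h.
  by rewrite -e /= join_subG !normal_norm.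
apply/negP => /eqP E.
case: (boolP [exists x in G, (x \notin M1) && (x \notin M2)]).
  case/exists_inP => x xG /andP[x1 x2].
  have xN : x \in 'N(H) by apply: (subsetP nHG).
  have xK : x \in (<[x]> <*> H)%G by rewrite /= (subsetP (joing_subl _ _)) // cycle_id.
  have e : (<[x]> <*> H)%G = G.
    apply: K.
    - by rewrite /overgroups /= joing_subr join_subG cycle_subG xG sHG.
    - by apply/negP => /subsetP/(_ x xK); rewrite (negPf x1).
    - by apply/negP => /subsetP/(_ x xK); rewrite (negPf x2).
  have cyc : cyclic (G / H).
    by rewrite -e /= quotientYidr ?cycle_subG // quotient_cycle // cycle_cyclic.
  have : (M1 / H)%G :==: (M2 / H)%G.
    rewrite (eq_subG_cyclic cyc) ?quotientS //.
    by rewrite !card_quotient ?normal_norm // E.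
  move/eqP => eq12.
  have := quotient_inj nH1 nH2 eq12 => e12.
  by move: n12; rewrite (group_inj e12) eqxx.
rewrite negb_exists_in => /forall_inP hall.
have [a aG aM1] : exists2 a, a \in G & a \notin M1.
  apply/subsetPn; apply: contra nM1G => h.
  by apply/eqP; apply: group_inj; apply/eqP; rewrite eqEsubset sM1G h.
have [b bG bM2] : exists2 b, b \in G & b \notin M2.
  apply/subsetPn; apply: contra nM2G => h.
  by apply/eqP; apply: group_inj; apply/eqP; rewrite eqEsubset sM2G h.
have aM2 : a \in M2 by move: (hall a aG); rewrite aM1 /= negbK.
have bM1 : b \in M1 by move: (hall b bG); rewrite bM2 andbT negbK.
move: (hall (a * b) (groupM aG bG)); rewrite negb_and !negbK.
case/orP => h.
  by move: aM1; rewrite -(groupMr a bM1) h.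
by move: bM2; rewrite -(groupMl b aM2) h.
Qed.
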